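(* Let $X_1,\dots,X_n$ be features and $Y$ a target that is not a.s. constant, let $k\in\{1,\dots,n\}$ and let $f$ be any function on the range of $X_k$. Let $\mathrm{FI}(k)$ be the Berkelmans–Pries feature importance of feature $k$ in the dataset $(X_1,\dots,X_n)$ and $\mathrm{FI}'(k)$ that of feature $k$ in the dataset $(X_1,\dots,X_{k-1},f(X_k),X_{k+1},\dots,X_n)$. Then $\mathrm{FI}'(k)\le\mathrm{FI}(k)$.
   Context: All random variables are discrete with finite support and defined on a common probability space. For discrete random variables (or random vectors) $X$ and $Y$, define $$\mathrm{UD}(X,Y):=\sum_x p_X(x)\sum_y \bigl|p_{Y\mid X=x}(y)-p_Y(y)\bigr|,$$ and, when $Y$ is not almost surely constant, $\mathrm{Dep}(X,Y):=\mathrm{UD}(X,Y)/\mathrm{UD}(Y,Y)$. Given features $X_1,\dots,X_n$ with index set $\mathcal{F}=\{1,\dots,n\}$ and $S\subseteq\mathcal{F}$, write $X_S=(X_i)_{i\in S}$ ($X_\emptyset$ constant) and $\mathrm{Dep}(S,Y):=\mathrm{Dep}(X_S,Y)$. The Berkelmans–Pries feature importance of feature $i$ in this dataset is $$\mathrm{FI}(i):=\sum_{S\subseteq\mathcal{F}\setminus\{i\}}\frac{|S|!\,(n-|S|-1)!}{n!}\bigl(\mathrm{Dep}(S\cup\{i\},Y)-\mathrm{Dep}(S,Y)\bigr).$$ *)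

(* Defs.v *)
From HB Require Import structures.
From mathcomp Require Import all_boot all_order all_algebra.
Set Implicit Arguments. Unset Strict Implicit. Unset Printing Implicit Defensive.
Import Order.TTheory GRing.Theory Num.Theory.
Local Open Scope ring_scope.

Section Defs.
Variables (R : realFieldType) (Omega : finType) (P : Omega -> R).

Definition prob (A : pred Omega) : R := \sum_(w | A w) P w.

Definition range_rv (A : eqType) (X : Omega -> A) : seq A :=
  undup [seq X w | w <- enum Omega].

(* UD(X,Y) = sum_x p_X(x) sum_y |p_{Y|X=x}(y) - p_Y(y)|,
   with p_{Y|X=x}(y) = P(X=x,Y=y)/P(X=x).  Values x with p_X(x)=0 and
   values y outside the range contribute 0. *)
Definition UD (A B : eqType) (X : Omega -> A) (Y : Omega -> B) : R :=
  \sum_(x <- range_rv X)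
     prob (fun w => X w == x) *
     \sum_(y <- range_rv Y)
        `| prob (fun w => (X w == x) && (Y w == y)) / prob (fun w => X w == x)
           - prob (fun w => Y w == y) |.

Definition Dep (A B : eqType) (X : Omega -> A) (Y : Omega -> B) : R :=
  UD X Y / UD Y Y.

End Defs.

Record feature (Omega : Type) := Feature { fty : eqType; frv : Omega -> fty }.
Arguments Feature {Omega fty} frv.

(* X_S as a random vector: the list of tagged values (i, X_i) for i in S
   (enumerated in increasing order); X_emptyset is constant [::]. *)
Definition XS (Omega : Type) (n : nat) (D : 'I_n -> feature Omega)
  (S : {set 'I_n}) (w : Omega) : seq {i : 'I_n & fty (D i)} :=
  [seq Tagged (fun i => fty (D i)) (frv (D i) w) | i <- enum S].

Definition DepS (R : realFieldType) (Omega : finType) (P : Omega -> R)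
  (n : nat) (D : 'I_n -> feature Omega) (B : eqType) (Y : Omega -> B)
  (S : {set 'I_n}) : R :=
  Dep P (XS D S) Y.

Definition FI (R : realFieldType) (Omega : finType) (P : Omega -> R)
  (n : nat) (D : 'I_n -> feature Omega) (B : eqType) (Y : Omega -> B)
  (i : 'I_n) : R :=
  \sum_(S : {set 'I_n} | i \notin S)
     ((#|S|`! * (n - #|S| - 1)`!)%:R / (n`!)%:R) *
     (DepS P D Y (i |: S) - DepS P D Y S).

Definition replace_feature (Omega : Type) (n : nat) (D : 'I_n -> feature Omega)
  (k : 'I_n) (U : eqType) (f : fty (D k) -> U) : 'I_n -> feature Omega :=
  fun i => if i == k then Feature (fun w => f (frv (D k) w)) else D i.
Arguments replace_feature {Omega n} D k {U} f.
Arguments FI {R Omega} P {n} D {B} Y i.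

(* Main.v *)
Require Import Defs.
From HB Require Import structures.
From mathcomp Require Import all_boot all_order all_algebra.
Import Order.TTheory GRing.Theory Num.Theory.
Local Open Scope ring_scope.
Set Implicit Arguments. Unset Strict Implicit.

Section S.
Variables (R : realFieldType) (Omega : finType) (P : Omega -> R).
Hypothesis P_ge0 : forall w, 0 <= P w.

Lemma mem_range (A : eqType) (X : Omega -> A) w : X w \in range_rv X.
Proof. by rewrite /range_rv mem_undup; apply: map_f; rewrite mem_enum. Qed.

Lemma uniq_range (A : eqType) (X : Omega -> A) : uniq (range_rv X).
Proof. exact: undup_uniq. Qed.

Lemma range_inv (A : eqType) (X : Omega -> A) x :
  x \in range_rv X -> exists w, X w = x.
Proof. by rewrite /range_rv mem_undup => /mapP [w _ ->]; exists w. Qed.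

Lemma sum_pick (A : eqType) (X : Omega -> A) w (F : A -> R) :
  \sum_(x <- range_rv X) (if X w == x then F x else 0) = F (X w).
Proof.
rewrite (bigD1_seq (X w)) ?mem_range ?uniq_range //= eqxx big1_seq ?addr0 //.
by move=> x /andP [nx _]; rewrite eq_sym (negbTE nx).
Qed.

Lemma dpi (A A' : eqType) (X : Omega -> A) (X' : Omega -> A')
  (fac : forall w1 w2, X w1 = X w2 -> X' w1 = X' w2) (h : Omega -> R) :
  \sum_(x' <- range_rv X') `|\sum_(w | X' w == x') h w|
  <= \sum_(x <- range_rv X) `|\sum_(w | X w == x) h w|.
Proof.
have step1 : forall x', \sum_(w | X' w == x') h w =
   \sum_(x <- range_rv X) \sum_(w | (X w == x) && (X' w == x')) h w.
  move=> x'; under [RHS]eq_bigr do rewrite big_mkcond /=.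
  rewrite exchange_big /= big_mkcond /=; apply: eq_bigr => w _.
  rewrite -(sum_pick X w (fun x => if X' w == x' then h w else 0)).
  by apply: eq_bigr => x _; case: (X w == x); case: (X' w == x').
under eq_bigr do rewrite step1.
apply: (le_trans (y := \sum_(x' <- range_rv X') \sum_(x <- range_rv X)
    `|\sum_(w | (X w == x) && (X' w == x')) h w|)).
  by apply: ler_sum => x' _; apply: ler_norm_sum.
rewrite exchange_big /= big_seq [X in _ <= X]big_seq; apply: ler_sum => x xr.
have [w0 Hw0] := range_inv xr.
rewrite (bigD1_seq (X' w0)) ?mem_range ?uniq_range //= [X in _ + X]big1_seq ?addr0.
  rewrite (eq_bigl (fun w => X w == x)) //.
  move=> w; case: eqP => //= Hw; rewrite (fac w w0) ?eqxx //.
  by rewrite Hw.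
move=> x' /andP [nx _]; rewrite big_pred0 ?normr0 // => w.
case: eqP => //= Hw; rewrite (fac w w0) ?Hw0 //.
by apply/negbTE; rewrite eq_sym.
Qed.

Lemma scal (a b c : R) : 0 <= a -> (a = 0 -> b = 0) -> a * `|b / a - c| = `|b - a * c|.
Proof.
move=> ha hb; have [a0|a0] := eqVneq a 0.
  rewrite a0 (hb a0); by rewrite !(mul0r, sub0r, subr0, normrN, normr0).
by rewrite -{1}(ger0_norm ha) -normrM mulrBr mulrCA divff // mulr1.
Qed.

Definition hh (B : eqType) (Y : Omega -> B) (y : B) (w : Omega) : R :=
  ((Y w == y)%:R - prob P (fun w => Y w == y)) * P w.

Lemma UD_alt (A B : eqType) (X : Omega -> A) (Y : Omega -> B) :
  UD P X Y = \sum_(x <- range_rv X) \sum_(y <- range_rv Y)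
     `|\sum_(w | X w == x) hh Y y w|.
Proof.
apply: eq_bigr => x _; rewrite mulr_sumr; apply: eq_bigr => y _.
rewrite scal; last first.
- move=> h0; apply/le_anti/andP; split; last by apply: sumr_ge0.
  rewrite -h0 /prob [X in _ <= X](bigID (fun w => Y w == y)) /=.
  rewrite (eq_bigl (fun w => (X w == x) && (Y w == y))) // lerDl.
  by apply: sumr_ge0.
- by apply: sumr_ge0.
congr `|_|; rewrite /hh.
under eq_bigr do rewrite mulrBl.
rewrite sumrB -mulr_sumr mulrC; congr (_ - _).
rewrite /prob big_mkcondr /=; apply: eq_bigr => w _.
by case: (Y w == y); rewrite ?mul1r ?mul0r.
Qed.

Lemma UD_le (A A' B : eqType) (X : Omega -> A) (X' : Omega -> A') (Y : Omega -> B)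
  (fac : forall w1 w2, X w1 = X w2 -> X' w1 = X' w2) :
  UD P X' Y <= UD P X Y.
Proof.
rewrite !UD_alt exchange_big [X in _ <= X]exchange_big /=.
by apply: ler_sum => y _; apply: dpi.
Qed.

Lemma UD_ge0 (A B : eqType) (X : Omega -> A) (Y : Omega -> B) : 0 <= UD P X Y.
Proof. by rewrite UD_alt; apply: sumr_ge0 => x _; apply: sumr_ge0. Qed.

Lemma Dep_le (A A' B : eqType) (X : Omega -> A) (X' : Omega -> A') (Y : Omega -> B)
  (fac : forall w1 w2, X w1 = X w2 -> X' w1 = X' w2) :
  Dep P X' Y <= Dep P X Y.
Proof.
by rewrite /Dep ler_wpM2r ?invr_ge0 ?UD_ge0 // UD_le.
Qed.
End S.
Lemma Tagged_inj (I : eqType) (T_ : I -> eqType) (i : I) (x y : T_ i) :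
  Tagged T_ x = Tagged T_ y -> x = y.
Proof.
by move=> H; have := congr1 (tagged_as (Tagged T_ x)) H; rewrite !tagged_asE.
Qed.

Lemma XS_eq (Omega : Type) (n : nat) (D : 'I_n -> feature Omega) S w1 w2 :
  XS D S w1 = XS D S w2 <-> (forall i, i \in S -> frv (D i) w1 = frv (D i) w2).
Proof.
rewrite /XS; split.
  move/eq_in_map => H i iS; have := H i; rewrite mem_enum => /(_ iS) /Tagged_inj //.
move=> H; apply/eq_in_map => i; rewrite mem_enum => iS /=; by rewrite H.
Qed.

Lemma rep_fwd (Omega : Type) (n : nat) (D : 'I_n -> feature Omega) k
  (U : eqType) (f : fty (D k) -> U) i w1 w2 :
  frv (D i) w1 = frv (D i) w2 ->
  frv (replace_feature D k f i) w1 = frv (replace_feature D k f i) w2.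
Proof.
rewrite /replace_feature; case: eqP => [e|ne] //=; subst i => /= -> //.
Qed.

Lemma rep_bwd (Omega : Type) (n : nat) (D : 'I_n -> feature Omega) k
  (U : eqType) (f : fty (D k) -> U) i w1 w2 : i != k ->
  frv (replace_feature D k f i) w1 = frv (replace_feature D k f i) w2 ->
  frv (D i) w1 = frv (D i) w2.
Proof.
move=> ik; rewrite /replace_feature; case: eqP => [e|ne] //=.
by rewrite e eqxx in ik.
Qed.

Theorem mainTheorem12 (R : realFieldType) (Omega : finType) (P : Omega -> R)
  (P_ge0 : forall w, 0 <= P w) (P_sum1 : \sum_(w : Omega) P w = 1)
  (n : nat) (D : 'I_n -> feature Omega) (B : eqType) (Y : Omega -> B)
  (Y_nonconst : ~ (exists y : B, prob P (fun w => Y w == y) = 1))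
  (k : 'I_n) (U : eqType) (f : fty (D k) -> U) :
  FI P (replace_feature D k f) Y k <= FI P D Y k.
Proof.
rewrite /FI; apply: ler_sum => S kS.
apply: ler_wpM2l; first by rewrite divr_ge0 ?ler0n.
apply: lerB; rewrite /DepS; apply: Dep_le => // w1 w2.
  move/XS_eq => H; apply/XS_eq => i iS; apply: rep_fwd; exact: H.
move/XS_eq => H; apply/XS_eq => i iS; apply: (rep_bwd (f := f)).
  by apply: contraNneq kS => <-.
exact: H.
Qed.
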